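(* For every string $s\in\Sigma^*$, $\mathcal{F}^{-1}(\mathcal{F}(s))=s$.
   Context: Let $\Sigma$ be an alphabet and let $\texttt{@},\texttt{\$}$ be two distinct symbols not in $\Sigma$. For $s\in\Sigma^*$ with $|s|=n$ let $\hat s=\texttt{@}\,s\,\texttt{\$}$ (length $n+2$, positions $1,\dots,n+2$); $\hat s[i..j)$ denotes the substring at positions $i,\dots,j-1$ (empty if $i\ge j$). The leading (resp. trailing) run of a non-empty string is its longest prefix (resp. suffix) consisting of a single repeated symbol. A bilateral token is a pair $(\sigma,p)$ with $\sigma$ a non-empty string and $p\ge 0$ an integer (split position); $\sigma[1..p]$ is its front, $\sigma[p+1..|\sigma|]$ its back; it is terminal if $p=0$. The Flashback decomposition $\mathcal{F}(s)$ is the token sequence produced as follows. Start with active span $[lo,hi)=[1,n+3)$ of $\hat s$. At a step: if $lo\ge hi$, stop. Let $\ell$ be the length of the leading run of $\hat s[lo..hi)$. If $\ell=hi-lo$, append $(\hat s[lo..hi),0)$ and stop. Otherwise let $\hat s[r..hi)$ be the trailing run of $\hat s[lo..hi)$ and $\sigma=\hat s[lo..lo+\ell)\cdot\hat s[r..hi)$; if $lo+\ell\ge r$, append $(\sigma,0)$ and stop; otherwise append $(\sigma,\ell)$ and repeat with active span $[lo+\ell,r)$. For a token sequence $T=[\tau_0,\dots,\tau_{k-1}]$ with $\tau_i=(\sigma_i,p_i)$, define $N_{k-1}=\sigma_{k-1}$ and $N_i=\sigma_i[1..p_i]\cdot N_{i+1}\cdot\sigma_i[p_i+1..|\sigma_i|]$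 for $i<k-1$; the reconstruction $\mathcal{F}^{-1}(T)$ is $N_0$ with its first and last characters removed. *)

(* Defs.v *)
From HB Require Import structures.
From mathcomp Require Import all_boot.
Set Implicit Arguments. Unset Strict Implicit. Unset Printing Implicit Defensive.

(* Extended alphabet: symbols of Sigma (= T, any eqType) plus two fresh
   distinct sentinels @ (At) and $ (Dol). *)
Inductive sym (T : Type) := Chr of T | At | Dol.
Arguments At {T}. Arguments Dol {T}.

Definition sym_eq (T : eqType) (a b : sym T) : bool :=
  match a, b with
  | Chr x, Chr y => x == y
  | At, At => true
  | Dol, Dol => true
  | _, _ => false
  end.
Lemma sym_eqP (T : eqType) : Equality.axiom (@sym_eq T).
Proof.
by case=> [x||] [y||] /=; try (by constructor);
  apply: (iffP eqP) => [->|[]].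
Qed.
HB.instance Definition _ (T : eqType) := hasDecEq.Build (sym T) (@sym_eqP T).

(* hat s = @ s $  (positions 1..n+2) *)
Definition hat (T : eqType) (s : seq T) : seq (sym T) :=
  At :: rcons (map (@Chr T) s) Dol.

(* w[i..j) with 1-based positions: characters at positions i,...,j-1 *)
Definition substr (T : Type) (w : seq T) (i j : nat) : seq T :=
  take (j - i) (drop (i - 1) w).

Definition lead_run_len (T : eqType) (w : seq T) : nat :=
  match w with [::] => 0 | x :: _ => find (predC1 x) w end.

Definition trail_run_len (T : eqType) (w : seq T) : nat :=
  lead_run_len (rev w).

Definition token (T : Type) := (seq T * nat)%type.

(* One run of the Flashback procedure on the active span [lo,hi) of hs,
   with a fuel argument (the span strictly shrinks, so fuel = size hs + 1
   suffices). *)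
Fixpoint flash_aux (T : eqType) (hs : seq T) (fuel lo hi : nat)
  : seq (token T) :=
  match fuel with
  | 0 => [::]
  | fuel'.+1 =>
    if hi <= lo then [::] else
    let w := substr hs lo hi in
    let l := lead_run_len w in
    if l == hi - lo then [:: (w, 0)] else
    let r := hi - trail_run_len w in
    let sigma := substr hs lo (lo + l) ++ substr hs r hi in
    if r <= lo + l then [:: (sigma, 0)]
    else (sigma, l) :: flash_aux hs fuel' (lo + l) r
  end.

Definition flashback (T : eqType) (s : seq T) : seq (token (sym T)) :=
  flash_aux (hat s) (size (hat s)).+1 1 (size s + 3).

Fixpoint nest (T : Type) (ts : seq (token T)) : seq T :=
  match ts with
  | [::] => [::]
  | [:: (sigma, _)] => sigma
  | (sigma, p) :: ts' => take p sigma ++ nest ts' ++ drop p sigma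
  end.

Definition flashback_inv (T : Type) (ts : seq (token T)) : seq T :=
  let N0 := nest ts in take (size N0 - 2) (behead N0).

(* Main.v *)
Require Import Defs.
From mathcomp Require Import all_boot zify.
Set Implicit Arguments. Unset Strict Implicit.

Lemma lead_pos (T : eqType) (w : seq T) : w != [::] ->
  0 < lead_run_len w <= size w.
Proof.
case: w => [|x w] //= _; rewrite eqxx /=; by rewrite ltnS find_size.
Qed.

Lemma trail_pos (T : eqType) (w : seq T) : w != [::] ->
  0 < trail_run_len w <= size w.
Proof.
move=> hw; rewrite /trail_run_len -(size_rev w); apply: lead_pos.
by apply: contra hw => /eqP/(congr1 rev); rewrite revK => ->.
Qed.

Lemma runs_disj (T : eqType) (w : seq T) : w != [::] ->
  lead_run_len w != size w ->
  lead_run_len w + trail_run_len w <= size w.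
Proof.
move=> hw hl.
have /andP[l0 ln] := lead_pos hw.
have /andP[t0 tn] := trail_pos hw.
case: w hw hl l0 ln t0 tn => [|x w'] // _.
set w := x :: w'.
rewrite /trail_run_len.
case hv: (rev w) => [|y v'].
  by move: (congr1 size hv); rewrite size_rev.
rewrite -hv.
have lw : lead_run_len w = find (predC1 x) w by [].
have tv : lead_run_len (rev w) = find (predC1 y) (rev w) by rewrite hv.
rewrite lw tv => hl l0 ln t0 tn.
rewrite leqNgt; apply/negP => hlt.
set n := size w in hl ln tn hlt.
set l := find (predC1 x) w in hl l0 ln hlt.
set t := find (predC1 y) (rev w) in t0 tn hlt.
have lltn : l < n by rewrite ltn_neqAle hl ln.
have ha : has (predC1 x) w by rewrite has_find.
have /= a_ne := nth_find x ha.
have sr : size (rev w) = n by rewrite size_rev.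
have j1 : n - l.+1 < t by lia.
have := before_find x j1; rewrite /= nth_rev ?sr; last by lia.
have -> : n - (n - l.+1).+1 = l by lia.
move/negbFE/eqP => ay.
have j2 : t.-1 < t by lia.
have := before_find x j2; rewrite /= nth_rev ?sr; last by lia.
have -> : n - t.-1.+1 = n - t by lia.
move=> /negbFE/eqP by_.
have k1 : n - t < l by lia.
have := before_find x k1; rewrite /= => /negbFE/eqP.
by rewrite by_ -ay => /eqP; rewrite (negbTE a_ne).
Qed.

Lemma nest_cons (T : Type) (sigma : seq T) p ts :
  nest ((sigma, p) :: ts) = take p sigma ++ nest ts ++ drop p sigma.
Proof. by case: ts => [|t ts] //=; rewrite cat_take_drop. Qed.

Lemma size_substr (T : Type) (hs : seq T) lo hi :
  0 < lo <= hi -> hi <= (size hs).+1 -> size (substr hs lo hi) = hi - lo.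
Proof. move=> h1 h2; rewrite /substr size_takel // size_drop; lia. Qed.

Lemma substr_sub (T : Type) (hs : seq T) lo hi i j :
  0 < lo -> lo <= i -> i <= j -> j <= hi ->
  substr hs i j = take (j - i) (drop (i - lo) (substr hs lo hi)).
Proof.
move=> h1 h2 h3 h4; rewrite /substr.
have -> : hi - lo = (hi - i) + (i - lo) by lia.
rewrite -take_drop drop_drop take_takel; last by lia.
by have -> : i - lo + (lo - 1) = i - 1 by lia.
Qed.

Lemma flash_ok (T : eqType) (hs : seq T) fuel lo hi :
  0 < lo -> hi <= (size hs).+1 -> hi - lo < fuel ->
  nest (flash_aux hs fuel lo hi) = substr hs lo hi.
Proof.
elim: fuel lo hi => [|f IH] lo hi h1 h2 h3 //=.
case: ifP => hle.
  rewrite /substr. have e : hi - lo = 0 by lia. by rewrite e take0.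
have hle' : lo <= hi by lia.
set w := substr hs lo hi.
have sw : size w = hi - lo by apply: size_substr => //; rewrite h1.
have wn : w != [::] by rewrite -size_eq0 sw; lia.
case: ifP => [/eqP _ //|hl].
have hl' : lead_run_len w != size w by rewrite sw hl.
have hd := runs_disj wn hl'.
have /andP[l0 ln] := lead_pos wn.
have /andP[t0 tn] := trail_pos wn.
set l := lead_run_len w in hl hl' hd l0 ln *.
set t := trail_run_len w in hd t0 tn *.
have ea : substr hs lo (lo + l) = take l w.
  by rewrite (substr_sub hs h1 (leqnn lo) (leq_addr _ _) (_ : lo + l <= hi)) ?subnn ?drop0 ?addKn //; lia.
have eb : substr hs (hi - t) hi = drop (hi - t - lo) w.
  rewrite (substr_sub hs h1 (_ : lo <= hi - t) (_ : hi - t <= hi) (leqnn hi)); try lia.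
  by rewrite take_oversize // size_drop sw; lia.
rewrite ea eb.
case: ifP => hr.
  have -> : hi - t - lo = l by lia.
  by rewrite /= cat_take_drop.
rewrite nest_cons IH; first last; try lia.
rewrite (substr_sub hs h1 (_ : lo <= lo + l) (_ : lo + l <= hi - t) (_ : hi - t <= hi)); try lia.
have sl : size (take l w) = l by rewrite size_takel.
rewrite take_size_cat // drop_size_cat // addKn.
have -> : hi - t - lo = (hi - t - (lo + l)) + l by lia.
  by rewrite -/w -drop_drop !cat_take_drop.
Qed.

Theorem theorem4p2 (Sigma : eqType) (s : seq Sigma) :
  flashback_inv (flashback s) = map (@Chr Sigma) s.
Proof.
have hs : size (hat s) = size s + 2 by rewrite /hat /= size_rcons size_map addn2.
rewrite /flashback_inv /flashback flash_ok //; last first.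
- by rewrite hs; lia.
- by rewrite hs; lia.
rewrite /substr (_ : size s + 3 - 1 = size (hat s)); last by rewrite hs; lia.
rewrite subnn drop0 take_size.
rewrite hs addnK /hat /=.
by rewrite -cats1 -(size_map (@Chr Sigma)) take_size_cat.
Qed.
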